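(* Let $G$ be a graph with a cut-vertex $v$ such that $G-\{v\}$ is the disjoint union $G_1\cup G_2$ of two graphs (with no edges between $G_1$ and $G_2$; $G_1,G_2$ need not be connected) and $v$ has at least two neighbours in $G_1$ and at least two neighbours in $G_2$. Then $G\notin\mathcal{G}^{\rm SSP}$.
   Context: All graphs are finite, simple, undirected. For a graph $G$ on $\{1,\ldots,n\}$, $\mathcal{S}(G)$ is the set of real symmetric $n\times n$ matrices $A=(a_{ij})$ with $a_{ij}\neq0$ iff $\{i,j\}\in E(G)$ for $i\neq j$ (diagonal arbitrary). A real symmetric $A$ has the strong spectral property (SSP) if the only real symmetric $X$ with $A\circ X=0$, $I\circ X=0$, $AX-XA=0$ is $X=0$ ($\circ$ = entrywise product). $\mathcal{G}^{\rm SSP}$ is the set of graphs $G$ such that every matrix in $\mathcal{S}(G)$ has the SSP. *)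

(* Defs.v *)
From HB Require Import structures.
From mathcomp Require Import all_boot all_order all_algebra.
From mathcomp Require Import reals.
Set Implicit Arguments. Unset Strict Implicit. Unset Printing Implicit Defensive.
Import Order.TTheory GRing.Theory Num.Theory.
Local Open Scope ring_scope.

Definition simple_graph (n : nat) (e : rel 'I_n) : Prop :=
  symmetric e /\ irreflexive e.

Definition hadamard (R : realType) (n : nat) (A B : 'M[R]_n) : 'M[R]_n :=
  \matrix_(i, j) (A i j * B i j).

Definition in_S (R : realType) (n : nat) (e : rel 'I_n) (A : 'M[R]_n) : Prop :=
  A^T = A /\ (forall i j : 'I_n, i != j -> (A i j != 0) = e i j).

Definition SSP (R : realType) (n : nat) (A : 'M[R]_n) : Prop :=
  forall X : 'M[R]_n, X^T = X -> hadamard A X = 0 -> hadamard 1%:M X = 0 ->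
    A *m X - X *m A = 0 -> X = 0.

Definition G_SSP (R : realType) (n : nat) (e : rel 'I_n) : Prop :=
  forall A : 'M[R]_n, in_S e A -> SSP A.

(* Main.v *)
Require Import Defs.
From HB Require Import structures.
From mathcomp Require Import all_boot all_order all_algebra.
From mathcomp Require Import reals.
Set Implicit Arguments. Unset Strict Implicit. Unset Printing Implicit Defensive.
Import Order.TTheory GRing.Theory Num.Theory.
Local Open Scope ring_scope.

Section Constr.
Variables (R : realType) (n : nat) (e : rel 'I_n) (v : 'I_n) (c : 'I_n -> R).
Hypothesis sg : simple_graph e.

Definition Om : 'M[R]_n := \matrix_(i, j)
  (if e i j then (if i == v then c j else if j == v then c i else 1) else 0).
Definition dg (i : 'I_n) : R := if i == v then 0 else - \sum_(k | k != v) Om i k.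
Definition Am : 'M[R]_n := Om + \matrix_(i, j) ((i == j)%:R * dg i).

Lemma Om_sym : Om^T = Om.
Proof.
case: sg => esym eirr.
apply/matrixP => i j; rewrite !mxE esym.
case: ifP => // eji.
case hj: (j == v); case hi: (i == v) => //.
by move/eqP: hj => hj; move/eqP: hi => hi; rewrite hj hi eirr in eji.
Qed.

Lemma Am_sym : Am^T = Am.
Proof.
rewrite /Am raddfD /= Om_sym; congr (_ + _); apply/matrixP => i j; rewrite !mxE.
by have [->|hij] := eqVneq j i; rewrite ?eqxx // !mul0r.
Qed.

Lemma Am_off i j : i != j -> Am i j = Om i j.
Proof. by move=> hij; rewrite !mxE (negbTE hij) mul0r addr0. Qed.

Lemma Ax (V W : {set 'I_n}) : V :|: W = [set~ v] -> [disjoint V & W] ->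
  (forall i j, i \in V -> j \in W -> ~~ e i j) ->
  forall i, i != v -> (Am *m \col_j (j \in V)%:R) i 0 = 0.
Proof.
case: sg => esym eirr.
move=> cov dis noe i iv; rewrite mxE.
have -> : \sum_j Am i j * (\col_j (j \in V)%:R) j 0 = \sum_(j in V) Am i j.
  rewrite [RHS]big_mkcond /=; apply: eq_bigr => j _; rewrite mxE.
  by case: (j \in V); rewrite ?mulr1 ?mulr0.
have -> : \sum_(j in V) Am i j = \sum_(j in V) Om i j + (i \in V)%:R * dg i.
  rewrite /Am; under eq_bigr => j _ do rewrite mxE [X in _ + X]mxE.
  rewrite big_split /=; congr (_ + _).
  case iV: (i \in V).
    rewrite (bigD1 i) //= eqxx big1 ?addr0 // => j /andP[_ hj].
    by rewrite eq_sym (negbTE hj) mul0r.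
  by rewrite big1 ?mul0r // => j jV; have [ij|] := eqVneq i j; [rewrite ij jV in iV | rewrite mul0r].
have iVW : i \in V :|: W by rewrite cov !inE.
case iV: (i \in V).
  rewrite mul1r /dg (negbTE iv).
  have -> : \sum_(k | k != v) Om i k = \sum_(k in V) Om i k.
    rewrite [LHS]big_mkcond [RHS]big_mkcond; apply: eq_bigr => k _.
    have : (k \in V :|: W) = (k != v) by rewrite cov !inE.
    rewrite inE.
    case kV: (k \in V) => /=.
      by move=> <-.
    case kW: (k \in W) => /= <- //.
    by rewrite mxE (negbTE (noe _ _ iV kW)).
  by rewrite subrr.
have iW : i \in W by move: iVW; rewrite inE iV.
rewrite mul0r addr0 big1 // => j jV; rewrite mxE esym.
by rewrite (negbTE (noe _ _ jV iW)).
Qed.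

Lemma Axv (V : {set 'I_n}) : v \notin V ->
  (Am *m \col_j (j \in V)%:R) v 0 = \sum_(j in [set u in V | e v u]) c j.
Proof.
case: sg => esym eirr.
move=> vV; rewrite mxE.
rewrite [RHS]big_mkcond /=; apply: eq_bigr => j _; rewrite !mxE inE.
have [<-|hvj] := eqVneq v j.
  by rewrite eirr andbF /dg eqxx mulr0 add0r mul0r.
rewrite mul0r addr0 eqxx.
by case: (j \in V); case: (e v j); rewrite /= ?mulr1 ?mulr0.
Qed.

Lemma Am_VW (V W : {set 'I_n}) i j : [disjoint V & W] ->
  (forall i j, i \in V -> j \in W -> ~~ e i j) ->
  Am i j * ((i \in V)%:R * (j \in W)%:R) = 0.
Proof.
move=> dis noe.
case: (boolP (i \in V)) => iV; last by rewrite mul0r mulr0.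
case: (boolP (j \in W)) => jW; last by rewrite mulr0 mulr0.
have ij : i != j.
  by apply/eqP => ij; move: iV; rewrite ij (disjointFl dis jW).
by rewrite Am_off // mxE (negbTE (noe _ _ iV jW)) mul0r.
Qed.

End Constr.

Theorem corollary2p6 (R : realType) (n : nat) (e : rel 'I_n) (v : 'I_n)
    (V1 V2 : {set 'I_n}) :
  simple_graph e ->
  v \notin V1 -> v \notin V2 -> [disjoint V1 & V2] ->
  V1 :|: V2 = [set~ v] ->
  (forall i j, i \in V1 -> j \in V2 -> ~~ e i j) ->
  (2 <= #|[set u in V1 | e v u]|)%N ->
  (2 <= #|[set u in V2 | e v u]|)%N ->
  ~ G_SSP R e.
Proof.
move=> sg v1 v2 dis cov noe h1 h2 HSSP.
have sg' := sg; case: sg' => esym eirr.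
set N1 := [set u in V1 | e v u] in h1.
set N2 := [set u in V2 | e v u] in h2.
have [a1 a1N] : exists a1, a1 \in N1 by apply/card_gt0P; apply: leq_trans h1.
have [b1 b1N] : exists b1, b1 \in N2 by apply/card_gt0P; apply: leq_trans h2.
pose k1 : R := (#|N1|)%:R.
pose k2 : R := (#|N2|)%:R.
pose c u := if u == a1 then 1 - k1 else if u == b1 then 1 - k2 else 1.
have a1V : a1 \in V1 by move: a1N; rewrite inE => /andP[].
have b1V : b1 \in V2 by move: b1N; rewrite inE => /andP[].
have k1n : 1 - k1 != 0.
  rewrite subr_eq0 eq_sym pnatr_eq1; apply/eqP => E; rewrite E in h1; done.
have k2n : 1 - k2 != 0.
  rewrite subr_eq0 eq_sym pnatr_eq1; apply/eqP => E; rewrite E in h2; done.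
have c0 : forall u, c u != 0.
  by move=> u; rewrite /c; case: ifP => _ //; case: ifP => _ //; rewrite oner_neq0.
pose A := Am e v c.
have inS : in_S e A.
  split; first exact: Am_sym.
  move=> i j ij; rewrite Am_off // mxE.
  case: (e i j); last by rewrite eqxx.
  by case: (i == v); case: (j == v); rewrite ?c0 ?oner_neq0.
have noe' : forall i j, i \in V2 -> j \in V1 -> ~~ e i j.
  by move=> i j iV jV; rewrite esym; apply: noe.
have dis' : [disjoint V2 & V1] by rewrite disjoint_sym.
have cov' : V2 :|: V1 = [set~ v] by rewrite setUC.
pose x : 'cV[R]_n := \col_j (j \in V1)%:R.
pose y : 'cV[R]_n := \col_j (j \in V2)%:R.
have Ax0 : A *m x = 0.
  apply/matrixP => i j0; rewrite ord1 [RHS]mxE.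
  have [->|iv] := eqVneq i v; last by rewrite /A /x; exact: (Ax c sg cov dis noe iv).
  rewrite /A /x /y (Axv c sg v1).
  have -> : \sum_(j in N1) c j = \sum_(j in N1) (1 - (j == a1)%:R * k1).
    apply: eq_bigr => j jN.
    have jV : j \in V1 by move: jN; rewrite inE => /andP[].
    have jb : (j == b1) = false.
      by apply/negbTE/eqP => E; move: jV; rewrite E (disjointFl dis b1V).
    by rewrite /c; case: (j == a1); rewrite ?jb ?mul1r ?mul0r ?subr0.
  rewrite big_split /= sumr_const sumrN (bigD1 a1) //= eqxx mul1r big1 ?addr0.
    by rewrite subrr.
  by move=> j /andP[_ /negbTE ->]; rewrite mul0r.
have Ay0 : A *m y = 0.
  apply/matrixP => i j0; rewrite ord1 [RHS]mxE.
  have [->|iv] := eqVneq i v; last by rewrite /A /y; exact: (Ax c sg cov' dis' noe' iv).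
  rewrite /A /x /y (Axv c sg v2).
  have -> : \sum_(j in N2) c j = \sum_(j in N2) (1 - (j == b1)%:R * k2).
    apply: eq_bigr => j jN.
    have jV : j \in V2 by move: jN; rewrite inE => /andP[].
    have ja : (j == a1) = false.
      by apply/negbTE/eqP => E; move: jV; rewrite E (disjointFr dis a1V).
    by rewrite /c ja; case: (j == b1); rewrite ?mul1r ?mul0r ?subr0.
  rewrite big_split /= sumr_const sumrN (bigD1 b1) //= eqxx mul1r big1 ?addr0.
    by rewrite subrr.
  by move=> j /andP[_ /negbTE ->]; rewrite mul0r.
pose X := x *m y^T + y *m x^T.
have Xij : forall i j, X i j = (i \in V1)%:R * (j \in V2)%:R + (i \in V2)%:R * (j \in V1)%:R.
  by move=> i j; rewrite !mxE !big_ord1 !mxE.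
have X0 := HSSP A inS X.
have : X = 0.
  apply: X0.
  - by rewrite raddfD /= !trmx_mul !trmxK addrC.
  - apply/matrixP => i j; rewrite mxE [RHS]mxE Xij mulrDr.
    by rewrite (Am_VW _ _ _ _ dis noe) (Am_VW _ _ _ _ dis' noe') addr0.
  - apply/matrixP => i j; rewrite mxE [RHS]mxE Xij mxE.
    have [->|] := eqVneq i j; last by rewrite mul0r.
    case: (boolP (j \in V1)) => jV; last by rewrite !mulr0 addr0 mul0r !mulr0.
    by rewrite (disjointFr dis jV) !(mulr0, mul0r, addr0).
  - have yA : y^T *m A = 0.
      by have := congr1 trmx Ay0; rewrite trmx_mul trmx0 /A Am_sym.
    have xA : x^T *m A = 0.
      by have := congr1 trmx Ax0; rewrite trmx_mul trmx0 /A Am_sym.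
    clearbody A; rewrite /X mulmxDr mulmxDl !mulmxA Ax0 Ay0 !mul0mx.
    by rewrite -(mulmxA x) -(mulmxA y) yA xA !mulmx0 !addr0 subrr.
move=> HX; have := congr1 (fun M : 'M[R]_n => M a1 b1) HX; rewrite /= Xij mxE a1V b1V (disjointFr dis a1V).
by rewrite mulr1 mul0r addr0 => /eqP; rewrite oner_eq0.
Qed.
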